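(* Assume $\lambda_{\max}(L_1)>\lambda_{\max}(L_2)$, that $\lambda_N^1:=\lambda_{\max}(L_1)$ is a simple eigenvalue of $L_1$ with eigenvector $v_N^1$, and that the nodal set $\{x: v_N^1(x)=0\}$ is non-empty. Let $c_1^*>0$ be the largest budget such that for $0\le c<c_1^*$ the optimal largest eigenvalue $\lambda_n^*(c)$ is simple, and let $W^*=\operatorname{diag}(w^* )$ where $w^*$ is an optimal weight at budget $c=c_1^*$. Define $\bar L=\frac{L_1+L_2}{2}-\lambda_N^1 I$, $\tilde L=\frac{L_1-L_2}{2}$ and $Q=\bar L-\tilde L\bar L^\dagger\tilde L$, where $\dagger$ denotes the Moore–Penrose pseudoinverse. Then the matrix $Q+2W^*$ has a zero eigenvalue.
   Context: A multiplex network consists of two layers $G_1,G_2$, simple undirected graphs on $N$ vertices each with Laplacians $L_1,L_2\in\mathbb{R}^{N\times N}$; the $i$-th vertex of $G_1$ is joined by an interlayer edge of weight $w_i\ge0$ to the $i$-th vertex of $G_2$. With $W=\operatorname{diag}(w)$, the multiplex Laplacian is $L(w)=\begin{bmatrix}L_1+W&-W\\-W&L_2+W\end{bmatrix}$. For a budget $c\ge0$, $\lambda_n^*(c)=\min\{\lambda_{\max}(L(w)):w\ge0,\ w^T\boldsymbol 1=c\}$, and a weight attaining this minimum is called optimal. *)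

(* Defs.v *)
From HB Require Import structures.
From mathcomp Require Import all_boot all_order all_algebra.
From mathcomp Require Import classical_sets reals.
Set Implicit Arguments. Unset Strict Implicit. Unset Printing Implicit Defensive.
Import Order.TTheory GRing.Theory Num.Theory.
Local Open Scope ring_scope.
Local Open Scope classical_set_scope.

Section Multiplex.
Variable R : realType.

Definition simple_graph (N : nat) (e : rel 'I_N) : Prop :=
  (forall i, ~~ e i i) /\ (forall i j, e i j = e j i).

Definition laplacian (N : nat) (e : rel 'I_N) : 'M[R]_N :=
  \matrix_(i, j) (if i == j then (#|[set k | e i k]|)%:R
                  else if e i j then -1 else 0).

Definition multiplex_laplacian (N : nat) (L1 L2 : 'M[R]_N) (w : 'rV[R]_N)
  : 'M[R]_(N + N) :=
  block_mx (L1 + diag_mx w) (- diag_mx w) (- diag_mx w) (L2 + diag_mx w).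

Definition lambda_max (n : nat) (A : 'M[R]_n) : R :=
  sup [set mu : R | eigenvalue A mu].

Definition simple_eigenvalue (n : nat) (A : 'M[R]_n) (mu : R) : Prop :=
  mup mu (char_poly A) = 1%N.

Definition admissible (N : nat) (c : R) (w : 'rV[R]_N) : Prop :=
  (forall i, 0 <= w 0 i) /\ \sum_i w 0 i = c.

Definition optimal_weight (N : nat) (L1 L2 : 'M[R]_N) (c : R) (w : 'rV[R]_N)
  : Prop :=
  admissible c w /\
  forall w', admissible c w' ->
    lambda_max (multiplex_laplacian L1 L2 w)
      <= lambda_max (multiplex_laplacian L1 L2 w').

Definition optimal_simple (N : nat) (L1 L2 : 'M[R]_N) (c : R) : Prop :=
  forall w, optimal_weight L1 L2 c w ->
    simple_eigenvalue (multiplex_laplacian L1 L2 w)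
                      (lambda_max (multiplex_laplacian L1 L2 w)).

Definition moore_penrose (n : nat) (A X : 'M[R]_n) : Prop :=
  [/\ A *m X *m A = A, X *m A *m X = X,
      (A *m X)^T = A *m X & (X *m A)^T = X *m A].

End Multiplex.

(* Main.v *)
Require Import Defs.
From HB Require Import structures.
From mathcomp Require Import all_boot all_order all_algebra.
From mathcomp Require Import boolp classical_sets reals.
From mathcomp Require Import complex.
From mathcomp Require Import ring lra.
Import Order.TTheory GRing.Theory Num.Theory.
Set Implicit Arguments. Unset Strict Implicit. Unset Printing Implicit Defensive.
Local Open Scope ring_scope.

Section S.
Variable R : realType.

Definition nrm2 n (x : 'rV[R]_n) : R := (x *m x^T) 0 0.

Lemma nrm2E n (x : 'rV[R]_n) : nrm2 x = \sum_(i < n) (x 0 i) ^+ 2.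
Proof. by rewrite /nrm2 mxE; apply: eq_bigr => i _; rewrite mxE expr2. Qed.

Lemma nrm2_ge0 n (x : 'rV[R]_n) : 0 <= nrm2 x.
Proof. by rewrite nrm2E sumr_ge0 // => i _; rewrite sqr_ge0. Qed.

Lemma nrm2_eq0 n (x : 'rV[R]_n) : (nrm2 x == 0) = (x == 0).
Proof.
apply/idP/idP; last by move/eqP->; rewrite /nrm2 mul0mx mxE.
rewrite nrm2E psumr_eq0 => [/allP H|i _]; last by rewrite sqr_ge0.
apply/eqP/rowP => i; rewrite mxE.
by have := H i (mem_index_enum i); rewrite sqrf_eq0 => /eqP.
Qed.

Lemma nrm2Z n a (x : 'rV[R]_n) : nrm2 (a *: x) = a ^+ 2 * nrm2 x.
Proof. by rewrite !nrm2E mulr_sumr; apply: eq_bigr => i _; rewrite mxE exprMn. Qed.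

Lemma orth_first_row n (u : 'rV[R]_n.+1) : nrm2 u = 1 ->
  exists H : 'M[R]_n.+1, H *m H^T = 1%:M /\ row 0 H = u.
Proof.
move=> nu.
pose e : 'rV[R]_n.+1 := delta_mx 0 0.
have ee : e = row 0 1%:M by rewrite row1.
pose w := u - e.
have [w0|wn0] := eqVneq w 0.
  exists 1%:M; split; first by rewrite trmx1 mulmx1.
  by rewrite -ee; apply/eqP; rewrite eq_sym -subr_eq0 -/w w0.
have nw : nrm2 w = 2 - 2 * u 0 0.
  rewrite /nrm2 /w linearB /= mulmxBl !mulmxBr !mxE.
  have ue : (u *m e^T) 0 0 = u 0 0.
    rewrite trmx_delta mxE (bigD1 0) //= big1 => [|i /negbTE ni]; rewrite !mxE.
      by rewrite !eqxx mulr1 addr0.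
    by rewrite ni mulr0.
  have eu : (e *m u^T) 0 0 = u 0 0.
    rewrite mxE (bigD1 0) //= big1 => [|i /negbTE ni]; rewrite !mxE.
      by rewrite !eqxx mul1r addr0.
    by rewrite ni mul0r.
  have e1 : (e *m e^T) 0 0 = 1.
    rewrite trmx_delta mxE (bigD1 0) //= big1 => [|i /negbTE ni]; rewrite !mxE.
      by rewrite !eqxx mulr1 addr0.
    by rewrite ni mulr0.
  move: nu ue eu e1; rewrite /nrm2 !mxE => -> -> -> ->; lra.
have w00 : w 0 0 = u 0 0 - 1 by rewrite !mxE eqxx.
have nw0 : nrm2 w != 0 by rewrite nrm2_eq0.
have w00n : w 0 0 != 0.
  apply/eqP => h; move/eqP: nw0; apply; rewrite nw.
  have -> : u 0 0 = 1 by rewrite h in w00; lra.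
  lra.
pose c := 2 / nrm2 w.
pose X := w^T *m w.
have wwT : w *m w^T = (nrm2 w)%:M by rewrite [LHS]mx11_scalar.
have XX : X *m X = nrm2 w *: X.
  by rewrite /X mulmxA -[w^T *m w *m w^T]mulmxA wwT mul_mx_scalar -scalemxAl.
have XT : X^T = X by rewrite /X trmx_mul trmxK.
exists (1%:M - c *: X); split.
  have HT : (1%:M - c *: X)^T = 1%:M - c *: X.
    by rewrite -{2}XT; apply/matrixP => i j; rewrite !mxE eq_sym.
  rewrite HT mulmxBl !mulmxBr mul1mx mulmx1.
  rewrite -!scalemxAl -!scalemxAr XX scalerA mul1mx scalerA.
  have -> : c * c * nrm2 w = c + c.
    by rewrite /c; field.
  rewrite scalerDl; apply/matrixP => i j; rewrite !mxE; lra.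
rewrite rowE mulmxBr mulmx1 -/e -scalemxAr mulmxA.
have ewT : e *m w^T = (w 0 0)%:M.
  rewrite [LHS]mx11_scalar; congr (_%:M).
  rewrite mxE (bigD1 0) //= big1 => [|i /negbTE ni]; rewrite !mxE.
    by rewrite !eqxx mul1r addr0.
  by rewrite ni mul0r.
rewrite ewT mul_scalar_mx scalerA.
have -> : c * w 0 0 = -1.
  rewrite /c nw w00; field.
  by move: w00n; rewrite w00; apply: contraNneq => H; lra.
by rewrite scaleN1r opprK /w addrC subrK.
Qed.

Lemma real_eig n (A : 'M[R]_n.+1) : A^T = A -> exists mu, eigenvalue A mu.
Proof.
move=> sA.
pose AC := map_mx (real_complex R) A.
have herm : AC \is hermsymmx.
  apply: realsym_hermsym.
    apply/is_hermitianmxP; rewrite expr0 scale1r map_mx_id //.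
    by rewrite map_trmx sA.
  by apply/mxOverP => i j; rewrite mxE; apply/complex_realP; exists (A i j).
have dreal := hermitian_spectral_diag_real herm.
have /orthomx_spectralP eqA := hermitian_normalmx herm.
set U := spectralmx AC in eqA.
set d := spectral_diag AC in eqA dreal.
have Uu : U \in unitmx by apply: spectral_unit.
have eC : eigenvalue AC (d 0 0).
  apply/eigenvalueP; exists (delta_mx 0 0 *m U).
    rewrite eqA !mulmxA mulmxK //.
    have -> : (delta_mx 0 0 : 'rV_n.+1) *m diag_mx d = d 0 0 *: delta_mx 0 0.
      apply/matrixP => i j; rewrite mul_mx_diag !mxE.
      by rewrite ord1 eqxx /=; case: (j =P 0) => [->|_]; rewrite ?mulr0 ?mul0r ?mulr1 ?mul1r.
    by rewrite -scalemxAl.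
  rewrite mulmx_free_eq0 ?row_free_unit //.
  by apply/negP => /eqP/matrixP/(_ 0 0); rewrite !mxE !eqxx /= => /eqP; rewrite oner_eq0.
have dr : d 0 0 \is Num.real := mxOverP dreal 0 0.
exists (@complex.Re R (d 0 0)).
move: eC; rewrite eigenvalue_root_char /AC -map_char_poly -(RRe_real dr).
by rewrite fmorph_root eigenvalue_root_char.
Qed.

Lemma spectral_real n (A : 'M[R]_n) : A^T = A ->
  exists (P : 'M[R]_n) (d : 'rV[R]_n), P *m P^T = 1%:M /\ A = P^T *m diag_mx d *m P.
Proof.
elim: n A => [|n IH] A sA.
  exists 1%:M, 0; split; first by rewrite trmx1 mulmx1.
  by apply/matrixP => [[]].
have [mu /eigenvalueP [p pA pn0]] := real_eig sA.
pose s := nrm2 p.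
have s0 : 0 < s by rewrite lt_def nrm2_eq0 pn0 nrm2_ge0.
pose u := (Num.sqrt s)^-1 *: p.
have nu : nrm2 u = 1.
  rewrite /u nrm2Z -/s exprVn sqr_sqrtr ?ltW // mulVf //.
  by rewrite gt_eqF.
have uA : u *m A = mu *: u by rewrite -scalemxAl pA !scalerA mulrC.
have [H [HH H0]] := orth_first_row nu.
have HH' : H^T *m H = 1%:M := mulmx1C HH.
pose M : 'M[R]_(1 + n) := H *m A *m H^T.
have MT : M^T = M by rewrite /M !trmx_mul trmxK sA mulmxA.
have M0 : row 0 M = mu *: row 0 1%:M.
  by rewrite /M !row_mul H0 uA -scalemxAl -H0 -row_mul HH.
have M0j j : M 0 j = mu * (0 == j)%:R.
  by have /matrixP/(_ 0 j) := M0; rewrite !mxE.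
have eA : A = H^T *m M *m H.
  by rewrite /M !mulmxA HH' mul1mx -mulmxA HH' mulmx1.
clearbody M.
pose A' := drsubmx M.
have A'T : A'^T = A' by rewrite /A' trmx_drsub MT.
have [P' [d' [PP' eA']]] := IH A' A'T.
have l0 : lshift n (0 : 'I_1) = 0 :> 'I_(1 + n) by apply/val_inj.
have eM : M = block_mx (mu%:M) 0 0 A'.
  rewrite -[M in LHS]submxK; congr block_mx.
  - apply/matrixP => i j; rewrite !ord1 !mxE l0 M0j eqxx /=; by rewrite mulr1.
  - apply/matrixP => i j; rewrite !ord1 !mxE l0 M0j.
    by have -> : (0 == rshift 1 j) = false by []; rewrite mulr0.
  - apply/matrixP => i j; rewrite !ord1 !mxE -MT mxE l0 M0j.
    by have -> : (0 == rshift 1 i) = false by []; rewrite mulr0.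
pose B : 'M[R]_(1 + n) := block_mx 1%:M 0 0 P'.
have BT : B^T = block_mx 1%:M 0 0 P'^T by rewrite /B tr_block_mx !trmx0 trmx1.
exists (B *m H), (row_mx (mu%:M) d'); split.
  rewrite trmx_mul mulmxA -[B *m H *m H^T]mulmxA HH mulmx1 BT /B (mulmx_block (1%:M : 'M[R]_1) 0 0 P' 1%:M 0 0 P'^T).
  rewrite !mulmx0 !mul0mx !mulmx1 !addr0 !add0r PP'.
  by rewrite -scalar_mx_block.
rewrite eA eM trmx_mul BT (@diag_mx_row _ n 1 (mu%:M) d').
have -> : diag_mx (mu%:M : 'rV_1) = mu%:M.
  by apply/matrixP => i j; rewrite !ord1 !mxE.
rewrite -!mulmxA; congr (_ *m _); rewrite !mulmxA; congr (_ *m _).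
rewrite /B (mulmx_block (1%:M : 'M[R]_1) 0 0 P'^T (mu%:M) 0 0 (diag_mx d')).
rewrite ?mulmx0 ?mul0mx ?mulmx1 ?mul1mx ?addr0 ?add0r.
rewrite (mulmx_block (mu%:M : 'M[R]_1) 0 0 (P'^T *m diag_mx d') 1%:M 0 0 P').
by rewrite !mulmx0 !mul0mx ?mulmx1 !addr0 !add0r eA'.
Qed.

Definition qf n (A : 'M[R]_n) (x : 'rV[R]_n) : R := (x *m A *m x^T) 0 0.

Lemma qf_spec n (P : 'M[R]_n) (d : 'rV[R]_n) (x : 'rV[R]_n) :
  qf (P^T *m diag_mx d *m P) x = \sum_k d 0 k * ((x *m P^T) 0 k) ^+ 2.
Proof.
rewrite /qf !mulmxA -[x *m P^T *m diag_mx d *m P *m x^T]mulmxA.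
have -> : P *m x^T = (x *m P^T)^T by rewrite trmx_mul trmxK.
rewrite mxE; apply: eq_bigr => k _.
by rewrite mul_mx_diag !mxE; rewrite expr2; ring.
Qed.

Lemma nrm2_orth n (P : 'M[R]_n) (x : 'rV[R]_n) : P *m P^T = 1%:M ->
  nrm2 (x *m P^T) = nrm2 x.
Proof.
move=> PP; have PP' := mulmx1C PP.
by rewrite /nrm2 trmx_mul trmxK mulmxA -[x *m P^T *m P]mulmxA PP' mulmx1.
Qed.

Lemma lmax_spec n (A : 'M[R]_n.+1) : A^T = A ->
  [/\ eigenvalue A (lambda_max A),
      (forall mu, eigenvalue A mu -> mu <= lambda_max A) &
      forall x, qf A x <= lambda_max A * nrm2 x].
Proof.
move=> sA; have [P [d [PP eA]]] := spectral_real sA.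
have PP' := mulmx1C PP.
have [k _ kmax] := @arg_maxP _ _ 'I_n.+1 ord0 xpredT (fun k => d 0 k) isT.
set m := d 0 k.
have qb x : qf A x <= m * nrm2 x.
  rewrite eA qf_spec -(nrm2_orth x PP) nrm2E mulr_sumr.
  apply: ler_sum => i _; apply: ler_wpM2r; first by rewrite sqr_ge0.
  exact: kmax.
have em : eigenvalue A m.
  apply/eigenvalueP; exists (delta_mx 0 k *m P).
    rewrite eA !mulmxA -[delta_mx 0 k *m P *m P^T]mulmxA PP mulmx1.
    have -> : (delta_mx 0 k : 'rV_n.+1) *m diag_mx d = m *: delta_mx 0 k.
      apply/matrixP => i j; rewrite mul_mx_diag !mxE ord1 eqxx /=.
      by case: (j =P k) => [->|_]; rewrite ?mulr0 ?mul0r ?mulr1 ?mul1r.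
    by rewrite -scalemxAl.
  rewrite mulmx_free_eq0 ?row_free_unit; last first.
    by case: (mulmx1_unit PP).
  by apply/negP => /eqP/matrixP/(_ 0 k); rewrite !mxE !eqxx /= => /eqP; rewrite oner_eq0.
have ub mu : eigenvalue A mu -> mu <= m.
  move=> /eigenvalueP [p pA pn0].
  have : qf A p <= m * nrm2 p := qb p.
  rewrite /qf pA -scalemxAl mxE -/(nrm2 p).
  have : 0 < nrm2 p by rewrite lt_def nrm2_eq0 pn0 nrm2_ge0.
  by move=> hp; rewrite ler_pM2r.
have lm : lambda_max A = m.
  apply/eqP; rewrite eq_le; apply/andP; split.
    by apply: ge_sup; [exists m | move=> y /ub].
  apply: ub_le_sup => //; exists m => y /ub; done.
by rewrite lm; split.
Qed.

Lemma char_poly_orth n (P : 'M[R]_n) (d : 'rV[R]_n) : P *m P^T = 1%:M ->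
  char_poly (P^T *m diag_mx d *m P) = \prod_(i < n) ('X - (d 0 i)%:P).
Proof.
move=> PP; have PP' := mulmx1C PP.
have cD : char_poly (diag_mx d) = \prod_(i < n) ('X - (d 0 i)%:P).
  by rewrite char_poly_trig ?diag_mx_is_trig //; apply: eq_bigr => i _; rewrite mxE eqxx.
pose Pp := map_mx (@polyC R) P; pose PTp := map_mx (@polyC R) P^T.
rewrite -cD.
have PTPp : PTp *m Pp = 1%:M by rewrite -map_mxM PP' map_mx1.
have eX : ('X%:M : 'M[{poly R}]_n) = PTp *m 'X%:M *m Pp.
  by rewrite mul_mx_scalar -scalemxAl PTPp scalemx1.
rewrite /char_poly /char_poly_mx !map_mxM -/Pp -/PTp {1}eX.
rewrite -mulmxBl -mulmxBr !det_mulmx mulrAC -det_mulmx PTPp det1.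
by rewrite mul1r.
Qed.

Lemma mup_two n (P : 'M[R]_n) (d : 'rV[R]_n) mu k1 k2 : P *m P^T = 1%:M ->
  k1 != k2 -> d 0 k1 = mu -> d 0 k2 = mu ->
  (2 <= mup mu (char_poly (P^T *m diag_mx d *m P)))%N.
Proof.
move=> PP k12 d1 d2; rewrite char_poly_orth //.
have mon : \prod_(i < n) ('X - (d 0 i)%:P) \is monic.
  by apply: monic_prod => i _; apply: monicXsubC.
rewrite mup_geq ?monic_neq0 //.
rewrite (bigD1 k1) //= (bigD1 k2) //=.
move: d1 d2 => /= -> ->; rewrite mulrA -expr2.
  exact: dvdp_mulr.
by rewrite eq_sym.
Qed.

Lemma bil_diag n (x y w : 'rV[R]_n) :
  (x *m diag_mx w *m y^T) 0 0 = \sum_i w 0 i * x 0 i * y 0 i.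
Proof.
rewrite mxE; apply: eq_bigr => i _; rewrite mul_mx_diag !mxE; ring.
Qed.

Lemma qf_mult n (L1 L2 : 'M[R]_n) (w a b : 'rV[R]_n) :
  qf (multiplex_laplacian L1 L2 w) (row_mx a b) =
  qf L1 a + qf L2 b + \sum_i w 0 i * (a 0 i - b 0 i) ^+ 2.
Proof.
rewrite /qf /multiplex_laplacian mul_row_block tr_row_mx mul_row_col.
rewrite !mulmxDr !mulmxDl !mulmxN !mulNmx.
rewrite ![(_ + _ : 'M[R]_1) 0 0]mxE ![(- _ : 'M[R]_1) 0 0]mxE !bil_diag.
have -> : \sum_i w 0 i * (a 0 i - b 0 i) ^+ 2 =
  \sum_i w 0 i * a 0 i * a 0 i - \sum_i w 0 i * b 0 i * a 0 i
  - \sum_i w 0 i * a 0 i * b 0 i + \sum_i w 0 i * b 0 i * b 0 i.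
  rewrite -!sumrB -big_split /=; apply: eq_bigr => i _; ring.
lra.
Qed.

Lemma sum_delta2 n (F : 'I_n -> R) k :
  \sum_j F j * ((delta_mx 0 k : 'rV[R]_n) 0 j) ^+ 2 = F k.
Proof.
rewrite (bigD1 k) //= big1 => [|j /negbTE jk]; rewrite !mxE ?eqxx ?jk /=.
  by rewrite expr1n mulr1 addr0.
by rewrite expr0n /= mulr0.
Qed.

Lemma qfD n (A B : 'M[R]_n) x : qf (A + B) x = qf A x + qf B x.
Proof. by rewrite /qf mulmxDr mulmxDl mxE. Qed.

Lemma qfN n (A : 'M[R]_n) x : qf (- A) x = - qf A x.
Proof. by rewrite /qf mulmxN mulNmx mxE. Qed.

Lemma qfZ n a (A : 'M[R]_n) x : qf (a *: A) x = a * qf A x.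
Proof. by rewrite /qf -scalemxAr -scalemxAl mxE. Qed.

Lemma qfS n a x : qf (a%:M : 'M[R]_n) x = a * nrm2 x.
Proof. by rewrite /qf mul_mx_scalar -scalemxAl mxE. Qed.

Lemma qf0 n (A : 'M[R]_n) : qf A 0 = 0.
Proof. by rewrite /qf !mul0mx mxE. Qed.

Lemma nrm2_row n (a b : 'rV[R]_n) : nrm2 (row_mx a b) = nrm2 a + nrm2 b.
Proof. by rewrite /nrm2 tr_row_mx mul_row_col mxE. Qed.

Lemma lmax_spec' m (A : 'M[R]_m) : (0 < m)%N -> A^T = A ->
  [/\ eigenvalue A (lambda_max A),
      (forall mu, eigenvalue A mu -> mu <= lambda_max A) &
      forall x, qf A x <= lambda_max A * nrm2 x].
Proof. by case: m A => // m A _; apply: lmax_spec. Qed.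

Lemma lap_sym n (e : rel 'I_n) : simple_graph e -> (laplacian R e)^T = laplacian R e.
Proof.
move=> [_ es]; apply/matrixP => i j; rewrite !mxE eq_sym es.
by case: eqP => [->|].
Qed.

Lemma mult_sym n (L1 L2 : 'M[R]_n) w : L1^T = L1 -> L2^T = L2 ->
  (multiplex_laplacian L1 L2 w)^T = multiplex_laplacian L1 L2 w.
Proof.
move=> s1 s2; rewrite /multiplex_laplacian tr_block_mx.
have dT : (diag_mx w)^T = diag_mx w by rewrite tr_diag_mx.
have DT (A : 'M[R]_n) : A^T = A -> (A + diag_mx w)^T = A + diag_mx w.
  by move=> sA; rewrite linearD /= sA dT.
have NT : (- diag_mx w)^T = - diag_mx w.
  by rewrite linearN /= dT.
by rewrite DT // DT // NT.
Qed.
End S.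


Unset Implicit Arguments.

Theorem mainTheorem6 (R : realType) (N : nat) (e1 e2 : rel 'I_N)
  (c1 : R) (wstar : 'rV[R]_N) (Ldag : 'M[R]_N) :
  simple_graph e1 -> simple_graph e2 ->
  let L1 : 'M[R]_N := laplacian R e1 in
  let L2 : 'M[R]_N := laplacian R e2 in
  let lam1 := lambda_max L1 in
  lambda_max L2 < lam1 ->
  simple_eigenvalue L1 lam1 ->
  (exists v : 'rV[R]_N, [/\ v != 0, v *m L1 = lam1 *: v & exists x, v 0 x = 0]) ->
  0 < c1 ->
  (forall c : R, 0 <= c -> c < c1 -> optimal_simple L1 L2 c) ->
  (forall C : R, c1 < C -> exists c : R, [/\ 0 <= c, c < C & ~ optimal_simple L1 L2 c]) ->
  optimal_weight L1 L2 c1 wstar ->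
  let Lbar : 'M[R]_N := 2^-1 *: (L1 + L2) - lam1%:M in
  let Ltil : 'M[R]_N := 2^-1 *: (L1 - L2) in
  moore_penrose Lbar Ldag ->
  let Q : 'M[R]_N := Lbar - Ltil *m Ldag *m Ltil in
  eigenvalue (Q + 2 *: diag_mx wstar) 0.
Proof.
move=> g1 g2 L1 L2 lam1 hl2 _ [v [vn0 vL1 [x0 vx0]]] c1pos hsimple _ [[wpos wsum] wopt].
move=> Lbar Ltil [MP1 _ _ _]; cbv zeta.
have sL1 : L1^T = L1 := lap_sym R g1.
have sL2 : L2^T = L2 := lap_sym R g2.
have Nn : (0 < N)%N by apply: leq_ltn_trans (leq0n _) (ltn_ord x0).
have NN : (0 < N + N)%N by rewrite addn_gt0 Nn.
pose Lw (w : 'rV[R]_N) := multiplex_laplacian L1 L2 w.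
have specW (w : 'rV[R]_N) := lmax_spec' NN (mult_sym w sL1 sL2).
have [_ _ qL1] := lmax_spec' Nn sL1.
have [_ _ qL2] := lmax_spec' Nn sL2.
have nv : 0 < nrm2 v by rewrite lt_def nrm2_eq0 vn0 nrm2_ge0.
have qv : qf L1 v = lam1 * nrm2 v by rewrite /qf vL1 -scalemxAl mxE.
pose v' : 'rV[R]_(N + N) := row_mx v 0.
have nv' : nrm2 v' = nrm2 v by rewrite nrm2_row [nrm2 0]/nrm2 mul0mx mxE addr0.
have qv' (w : 'rV[R]_N) : qf (Lw w) v' = lam1 * nrm2 v + \sum_i w 0 i * (v 0 i) ^+ 2.
  rewrite /Lw qf_mult qf0 qv addr0; congr (_ + _); apply: eq_bigr => i _.
  by rewrite mxE subr0.
have lowb (w : 'rV[R]_N) : (forall i, 0 <= w 0 i) -> lam1 <= lambda_max (Lw w).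
  move=> wp; have [_ _ qW] := specW w.
  have := qW v'; rewrite qv' nv' => h.
  rewrite -(ler_pM2r nv); apply: le_trans h; rewrite lerDl.
  by apply: sumr_ge0 => i _; rewrite mulr_ge0 ?sqr_ge0.
pose plat (w : 'rV[R]_N) := forall x, qf (Lw w) x <= lam1 * nrm2 x.
have plat_lmax (w : 'rV[R]_N) : plat w -> lambda_max (Lw w) <= lam1.
  move=> pw; have [/eigenvalueP [p pA pn0] _ _] := specW w.
  have := pw p; rewrite /qf pA -scalemxAl mxE -/(nrm2 p).
  have hp : 0 < nrm2 p by rewrite lt_def nrm2_eq0 pn0 nrm2_ge0.
  by rewrite ler_pM2r.
pose ej : 'rV[R]_N := delta_mx 0 x0.
pose wt t := t *: ej.
have wtE t i : wt t 0 i = t * (i == x0)%:R by rewrite !mxE eqxx.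
have adm (t : R) : 0 <= t -> admissible t (wt t).
  move=> t0; split => [i|]; first by rewrite wtE mulr_ge0.
  rewrite (bigD1 x0) //= big1 => [|i /negbTE ni]; rewrite wtE ?eqxx ?mulr1 ?addr0 //.
  by rewrite ni mulr0.
pose g (x : 'rV[R]_(N + N)) := ((lsubmx x) 0 x0 - (rsubmx x) 0 x0) ^+ 2.
have g0 x : 0 <= g x by rewrite sqr_ge0.
have qwt t x : qf (Lw (wt t)) x = qf L1 (lsubmx x) + qf L2 (rsubmx x) + t * g x.
  rewrite -{1}(hsubmxK x) /Lw qf_mult; congr (_ + _).
  rewrite (bigD1 x0) //= big1 => [|i /negbTE ni]; rewrite wtE ?eqxx ?mulr1 ?addr0 //.
  by rewrite ni mulr0 mul0r.
have nrm2x (x : 'rV[R]_(N + N)) : nrm2 x = nrm2 (lsubmx x) + nrm2 (rsubmx x).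
  by rewrite -{1}(hsubmxK x) nrm2_row.
have plat0 : plat (wt 0).
  move=> x; rewrite qwt mul0r addr0 nrm2x mulrDr.
  apply: lerD; first exact: qL1.
  apply: le_trans (qL2 _) _; apply: ler_wpM2r; [exact: nrm2_ge0 | exact: ltW].
suff vW : v *m diag_mx wstar = 0.
  have Lunit : Lbar \in unitmx.
    rewrite unitmxE unitfE; apply/negP => /det0P [z zn0 zL].
    have : qf Lbar z = 0 by rewrite /qf zL mul0mx mxE.
    rewrite /Lbar qfD qfN qfZ qfD qfS.
    have nz : 0 < nrm2 z by rewrite lt_def nrm2_eq0 zn0 nrm2_ge0.
    have h1 : qf L1 z <= lam1 * nrm2 z := qL1 z.
    have h2 := qL2 z.
    have : lambda_max L2 * nrm2 z < lam1 * nrm2 z by rewrite ltr_pM2r.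
    move=> h3 h4; lra.
  have LL : Lbar *m Ldag = 1%:M.
    have := congr1 (mulmx^~ (invmx Lbar)) MP1; rewrite /= mulmxK // => ->; exact: mulmxV.
  have vLt : v *m Ltil = - (v *m Lbar).
    rewrite /Ltil /Lbar mulmxBr -!scalemxAr mulmxBr mulmxDr vL1 mul_mx_scalar.
    move: (v *m L2) => u.
    by apply/rowP => i; rewrite !mxE; lra.
  have eL : v *m Ltil *m Ldag *m Ltil = v *m Lbar.
    by rewrite vLt !mulNmx -(mulmxA _ Lbar) LL mulmx1 vLt opprK.
  apply/eigenvalueP; exists v => //.
  rewrite scale0r mulmxDr mulmxBr !mulmxA eL -scalemxAr vW scaler0.
  by rewrite subrr addr0.
have [pc|npc] := pselect (plat (wt c1)); last first.
  exfalso.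
  pose S : set R := fun t => 0 <= t /\ plat (wt t).
  have qdiff t s0 x : qf (Lw (wt t)) x = qf (Lw (wt s0)) x + (t - s0) * g x.
    by rewrite !qwt; ring.
  have Sle t : S t -> t <= c1.
    move=> [t0 pt]; rewrite leNgt; apply/negP => ct; apply: npc => x.
    have := pt x; rewrite (qdiff c1 t) => h.
    have : (c1 - t) * g x <= 0 by rewrite mulr_le0_ge0 ?g0 // subr_le0 ltW.
    lra.
  have S0 : S 0 by split => //; exact: plat0.
  have hub : has_ubound S by exists c1 => t /Sle.
  pose ts := sup S.
  have ts0 : 0 <= ts := ub_le_sup hub S0.
  have tsc : ts <= c1 by apply: ge_sup; [exists 0 | move=> t /Sle].
  have pts : plat (wt ts).
    move=> x; rewrite (qdiff ts 0) subr0.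
    have p0 := plat0 x.
    have [gx0|gn] := eqVneq (g x) 0; first by rewrite gx0 mulr0 addr0.
    have gp : 0 < g x by rewrite lt_def gn g0.
    have : ts <= (lam1 * nrm2 x - qf (Lw (wt 0)) x) / g x.
      apply: ge_sup; first by exists 0.
      move=> t [t0 pt]; have := pt x; rewrite (qdiff t 0) subr0 => h.
      by rewrite ler_pdivlMr //; lra.
    by rewrite ler_pdivlMr // => h; lra.
  have tslt : ts < c1.
    rewrite lt_def tsc andbT; apply/eqP => e; apply: npc; rewrite e; exact: pts.
  have wtp t : 0 <= t -> forall i, 0 <= wt t 0 i by move=> t0 i; exact: (adm t t0).1.
  have lamts : lambda_max (Lw (wt ts)) = lam1.
    by apply/le_anti; rewrite plat_lmax // lowb //; exact: wtp.
  have opt : optimal_weight L1 L2 ts (wt ts).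
    split; first exact: adm.
    move=> w' [w'p _]; rewrite [lambda_max _]lamts; exact: lowb.
  have simp := hsimple ts ts0 tslt (wt ts) opt.
  rewrite /simple_eigenvalue [lambda_max _]lamts in simp.
  have [P [d [PP eB]]] := spectral_real (mult_sym (wt ts) sL1 sL2).
  have PP' := mulmx1C PP.
  have qB x : qf (Lw (wt ts)) x = \sum_k d 0 k * ((x *m P^T) 0 k) ^+ 2.
    by rewrite /Lw eB qf_spec.
  have vW0 : v *m diag_mx (wt ts) = 0.
    apply/rowP => i; rewrite mul_mx_diag mxE [(0 : 'rV[R]_N) 0 i]mxE wtE.
    by case: eqP => [->|_]; rewrite ?vx0 ?mul0r ?mulr0.
  have v'B : v' *m Lw (wt ts) = lam1 *: v'.
    rewrite /Lw /multiplex_laplacian /v' mul_row_block !mul0mx !addr0 mulmxDr vL1.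
    by rewrite mulmxN vW0 addr0 oppr0 scale_row_mx scaler0.
  pose y' := v' *m P^T.
  have y'D : y' *m diag_mx d = lam1 *: y'.
    have : v' *m (P^T *m diag_mx d *m P) *m P^T = lam1 *: v' *m P^T by rewrite -eB v'B.
    by rewrite !mulmxA -(mulmxA _ P) PP mulmx1 -scalemxAl.
  have yk k : y' 0 k * d 0 k = lam1 * y' 0 k.
    by have /rowP/(_ k) := y'D; rewrite mul_mx_diag !mxE.
  have v'n0 : v' != 0 by rewrite -nrm2_eq0 nv' gt_eqF.
  have v'E : v' = y' *m P by rewrite /y' -mulmxA PP' mulmx1.
  have [k0 hk0] : exists k, y' 0 k != 0.
    apply/existsP; apply: contraNT v'n0 => /existsPn h.
    rewrite v'E; have -> : y' = 0.
      by apply/rowP => k; have := h k; rewrite negbK => /eqP ->; rewrite mxE.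
    by rewrite mul0mx.
  have dk0 : d 0 k0 = lam1.
    by apply: (mulfI hk0); rewrite yk mulrC.
  have uq k : d 0 k = lam1 -> k = k0.
    move=> dk; case: (eqVneq k k0) => // kn.
    have := mup_two PP kn dk dk0; rewrite -eB simp //.
  have yz k : k != k0 -> y' 0 k = 0.
    move=> kn; have := yk k; have dn : d 0 k != lam1 by apply: contraNneq kn => /uq ->.
    move=> /eqP; rewrite -subr_eq0 mulrC -mulrBl mulf_eq0 subr_eq0 (negbTE dn) /=.
    by move/eqP.
  have dle k : d 0 k <= lam1.
    have := pts (delta_mx 0 k *m P); rewrite qB.
    rewrite -(nrm2_orth _ PP) -!mulmxA PP mulmx1 nrm2E sum_delta2.
    have -> : \sum_(i < N + N) ((delta_mx 0 k : 'rV[R]_(N + N)) 0 i) ^+ 2 = 1.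
      by rewrite -[RHS](sum_delta2 (fun=> 1) k); apply: eq_bigr => i _; rewrite mul1r.
    by rewrite mulr1.
  pose h k := if k == k0 then 1 else lam1 - d 0 k.
  have [km _ kmin] := @arg_minP _ _ 'I_(N + N) k0 xpredT h isT.
  pose gam := h km.
  have gam0 : 0 < gam.
    rewrite /gam /h; case: eqP => // kn; rewrite subr_gt0 lt_def dle andbT.
    by apply/eqP => e; apply: kn; apply: uq; rewrite e.
  have gamk k : k != k0 -> gam <= lam1 - d 0 k.
    by move=> kn; have := kmin k isT; rewrite /h (negbTE kn).
  pose Sg (x : 'rV[R]_(N + N)) := \sum_(k | k != k0) ((x *m P^T) 0 k) ^+ 2.
  have b1 x : qf (Lw (wt ts)) x - lam1 * nrm2 x <= - (gam * Sg x).
    rewrite qB -(nrm2_orth x PP) nrm2E mulr_sumr -sumrB.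
    rewrite (bigD1 k0) //= dk0 subrr add0r /Sg mulr_sumr -sumrN.
    apply: ler_sum => k kn; rewrite -mulrBl -mulNr; apply: ler_wpM2r; first exact: sqr_ge0.
    by have := gamk k kn; lra.
  have y'E : y' = y' 0 k0 *: delta_mx 0 k0.
    apply/rowP => k; rewrite [RHS]mxE [delta_mx _ _ _ _]mxE eqxx /=.
    by case: eqP => [->|/eqP kn]; rewrite ?mulr1 // mulr0 yz.
  have rowk0 : delta_mx 0 k0 *m P = (y' 0 k0)^-1 *: v'.
    by rewrite v'E {2}y'E -scalemxAl scalerA mulVf // scale1r.
  have eL : ((delta_mx 0 k0 : 'rV[R]_(N + N)) *m P) 0 (lshift N x0) = 0.
    by rewrite rowk0 mxE /v' row_mxEl vx0 mulr0.
  have eR : ((delta_mx 0 k0 : 'rV[R]_(N + N)) *m P) 0 (rshift N x0) = 0.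
    by rewrite rowk0 mxE /v' row_mxEr [(0 : 'rV[R]_N) _ _]mxE mulr0.
  have b2 x : g x <= 2 * Sg x.
    pose y := x *m P^T.
    pose yp := y - y 0 k0 *: delta_mx 0 k0.
    pose xp := yp *m P.
    have xE : x = xp + y 0 k0 *: (delta_mx 0 k0 *m P).
      by rewrite /xp /yp mulmxBl -scalemxAl subrK /y -mulmxA PP' mulmx1.
    have nxp : nrm2 xp = Sg x.
      rewrite -(nrm2_orth _ PP) /xp -mulmxA PP mulmx1 nrm2E (bigD1 k0) //=.
      rewrite /yp !mxE !eqxx /= mulr1 subrr expr0n /= add0r /Sg.
      apply: eq_bigr => k /negbTE kn; rewrite !mxE kn mulr0 subr0.
      done.
    clearbody xp.
    set E := delta_mx 0 k0 *m P in xE eL eR; clearbody E.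
    have ga : g x = (xp 0 (lshift N x0) - xp 0 (rshift N x0)) ^+ 2.
      by rewrite /g [lsubmx x 0 x0]mxE [rsubmx x 0 x0]mxE xE !mxE eL eR !mulr0 !addr0.
    have ab : xp 0 (lshift N x0) ^+ 2 + xp 0 (rshift N x0) ^+ 2 <= nrm2 xp.
      rewrite nrm2E (bigD1 (lshift N x0)) //= (bigD1 (rshift N x0)) //=; last first.
        by rewrite eq_rlshift.
      rewrite addrA lerDl; apply: sumr_ge0 => i _; exact: sqr_ge0.
    rewrite ga -nxp; set a := xp 0 _ in ab *; set b := xp 0 _ in ab *.
    have := sqr_ge0 (a + b); nra.
  pose t1 := ts + gam / 2.
  have St1 : S t1.
    split; first by rewrite /t1; lra.
    move=> x; rewrite (qdiff t1 ts) /t1 addrAC subrr add0r.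
    have := b1 x; have := b2 x; have := g0 x; nra.
  have := ub_le_sup hub St1; rewrite /t1 -/ts; lra.
have hw : lambda_max (Lw (wt c1)) <= lam1 := plat_lmax _ pc.
have ho := wopt (wt c1) (adm c1 (ltW c1pos)).
have [_ _ qW] := specW wstar.
have := qW v'; rewrite qv' nv' => h.
have hs : \sum_i wstar 0 i * v 0 i ^+ 2 <= 0.
  have h' := le_trans h (ler_wpM2r (nrm2_ge0 v) (le_trans ho hw)).
  lra.
have ge0 i : 0 <= wstar 0 i * v 0 i ^+ 2 by rewrite mulr_ge0 ?sqr_ge0.
have hs0 : \sum_i wstar 0 i * v 0 i ^+ 2 = 0.
  by apply/le_anti; rewrite hs sumr_ge0.
have ht := psumr_eq0P (fun i _ => ge0 i) hs0.
apply/rowP => i; rewrite mul_mx_diag !mxE.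
have /eqP := ht i isT; rewrite mulf_eq0 sqrf_eq0 => /orP [] /eqP ->.
  by rewrite mulr0.
by rewrite mul0r.
Qed.
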